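(* Let $B\subset A$ be Hausdorff compact spaces with $B$ closed in $A$, let $G$ be an abelian group and $n\ge1$, and suppose $\gamma\in H_{n-1}(B;G)$ is nontrivial and $i^{n-1}_{B,A}(\gamma)=0$. Then there exists a closed set $K\subset A$ containing $B$ such that $K$ is an $(n-1)$-homology membrane for $\gamma$ spanned on $B$.
   Context: $H_k(\cdot;G)$ is Čech homology (defined via nerves of finite open covers); $i^k_{B,K}$ is induced by inclusion. For closed $B\subset K$, $K$ is an $(n-1)$-homology membrane spanned on $B$ for $\gamma\in H_{n-1}(B;G)$ if $i^{n-1}_{B,K}(\gamma)=0$ but $i^{n-1}_{B,K'}(\gamma)\ne0$ for every proper closed subset $K'\subsetneq K$ containing $B$. *)

(* Defs.v *)
From HB Require Import structures.
From mathcomp Require Import all_boot all_order all_algebra.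
Set Implicit Arguments. Unset Strict Implicit. Unset Printing Implicit Defensive.
Import GRing.Theory.
Local Open Scope ring_scope.

Record topology (X : Type) : Type := Topology {
  is_open : (X -> Prop) -> Prop;
  open_setT : is_open (fun _ => True);
  open_setI : forall U V, is_open U -> is_open V -> is_open (fun x => U x /\ V x);
  open_bigU : forall F : (X -> Prop) -> Prop,
      (forall U, F U -> is_open U) -> is_open (fun x => exists2 U, F U & U x) }.
Arguments is_open {X}.

Definition subset (X : Type) (A B : X -> Prop) := forall x, A x -> B x.

Definition is_closed (X : Type) (T : topology X) (C : X -> Prop) :=
  is_open T (fun x => ~ C x).

(* i-th member of a finite indexed family of sets (empty set out of range) *)
Definition nthset (X : Type) (U : seq (X -> Prop)) (i : nat) : X -> Prop :=
  nth (fun _ => False) U i.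

Definition compact_space (X : Type) (T : topology X) :=
  forall F : (X -> Prop) -> Prop, (forall U, F U -> is_open T U) ->
  (forall x, exists2 U, F U & U x) ->
  exists l : seq (X -> Prop), (forall i, (i < size l)%N -> F (nthset l i)) /\
    forall x, exists2 i, (i < size l)%N & nthset l i x.

Definition hausdorff_space (X : Type) (T : topology X) :=
  forall x y : X, x <> y -> exists U V, [/\ is_open T U, is_open T V, U x, V y &
    forall z, ~ (U z /\ V z)].

(* ---------- Finite open covers of a subspace S and their nerves ----------
   A finite open cover of the subspace S is a finite indexed family of open
   sets of the ambient space whose union contains S (its traces on S are the
   open sets of S; every finite open cover of S arises this way). *)
Definition open_cover (X : Type) (T : topology X) (S : X -> Prop)
    (U : seq (X -> Prop)) :=
  (forall i, (i < size U)%N -> is_open T (nthset U i)) /\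
  forall x, S x -> exists2 i, (i < size U)%N & nthset U i x.

(* ordered simplex (vertices may repeat) of the nerve of U relative to S *)
Definition nerve_simplex (X : Type) (S : X -> Prop) (U : seq (X -> Prop))
    (s : seq nat) :=
  all (fun i => (i < size U)%N) s /\
  exists2 x, S x & forall i, i \in s -> nthset U i x.

(* k-chains with coefficients in G (finitely supported automatically) *)
Definition chain (X : Type) (G : zmodType) (S : X -> Prop) (U : seq (X -> Prop))
    (k : nat) (c : seq nat -> G) :=
  forall s, c s != 0 -> size s = k.+1 /\ nerve_simplex S U s.

(* boundary: (bd c)(t) = sum_i (-1)^i sum_{s : d_i s = t} c s ; zero in degree -1 *)
Definition bd (G : zmodType) (m : nat) (c : seq nat -> G) : seq nat -> G :=
  fun t => if t is [::] then 0 else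
    \sum_(i < (size t).+1) \sum_(v < m)
       (if odd i then - c (take i t ++ (nat_of_ord v) :: drop i t)
        else c (take i t ++ (nat_of_ord v) :: drop i t)).

Definition cycle (X : Type) (G : zmodType) (S : X -> Prop) (U : seq (X -> Prop))
    (k : nat) (c : seq nat -> G) :=
  chain S U k c /\ forall t, bd (size U) c t = 0.

Definition boundary (X : Type) (G : zmodType) (S : X -> Prop) (U : seq (X -> Prop))
    (k : nat) (c : seq nat -> G) :=
  exists2 d : seq nat -> G, chain S U k.+1 d & forall t, c t = bd (size U) d t.

Definition refines (X : Type) (S : X -> Prop) (V U : seq (X -> Prop))
    (pi : nat -> nat) :=
  forall j, (j < size V)%N ->
    (pi j < size U)%N /\ forall x, S x -> nthset V j x -> nthset U (pi j) x.

Definition push (G : zmodType) (mV : nat) (pi : nat -> nat) (c : seq nat -> G)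
    : seq nat -> G :=
  fun t => \sum_(s : (size t).-tuple 'I_mV | map pi (map (@nat_of_ord mV) s) == t)
             c (map (@nat_of_ord mV) s).

(* ---------- Čech homology ----------
   An element of H_k(S;G) (inverse limit over finite open covers of the
   simplicial homology of the nerves) is represented by a family gamma of
   k-cycles, one for each finite open cover, compatible up to boundaries
   under all refinement projections. *)
Definition cech_class (X : Type) (T : topology X) (G : zmodType) (S : X -> Prop)
    (k : nat) (gamma : seq (X -> Prop) -> seq nat -> G) :=
  (forall U, open_cover T S U -> cycle S U k (gamma U)) /\
  (forall U V pi, open_cover T S U -> open_cover T S V -> refines S V U pi ->
     boundary S U k (fun t => push (size V) pi (gamma V) t - gamma U t)).

Definition cech_zero (X : Type) (T : topology X) (G : zmodType) (S : X -> Prop)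
    (k : nat) (gamma : seq (X -> Prop) -> seq nat -> G) :=
  forall U, open_cover T S U -> boundary S U k (gamma U).

(* i^k_{B,K}(gamma) = 0 for B ⊆ K: for every finite open cover U of K,
   the cycle gamma U (on the nerve of U|B) bounds in the nerve of U rel. K *)
Definition incl_zero (X : Type) (T : topology X) (G : zmodType)
    (B K : X -> Prop) (k : nat) (gamma : seq (X -> Prop) -> seq nat -> G) :=
  forall U, open_cover T K U -> boundary K U k (gamma U).

Definition homology_membrane (X : Type) (T : topology X) (G : zmodType)
    (B K : X -> Prop) (k : nat) (gamma : seq (X -> Prop) -> seq nat -> G) :=
  [/\ is_closed T K, subset B K, incl_zero T B K k gamma &
   forall K', is_closed T K' -> subset B K' -> subset K' K -> ~ subset K K' ->
     ~ incl_zero T B K' k gamma].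

(* Main.v *)
Require Import Defs.
From HB Require Import structures.
From mathcomp Require Import all_boot all_order all_algebra.
From Stdlib Require Import FunctionalExtensionality PropExtensionality Classical IndefiniteDescription.
From mathcomp Require classical_sets boolp.
Import GRing.Theory.
Local Open Scope ring_scope.
Set Implicit Arguments. Unset Strict Implicit. Unset Printing Implicit Defensive.

Lemma ext_open (X : Type) (T : topology X) (A C : X -> Prop) :
  (forall x, A x <-> C x) -> is_open T A -> is_open T C.
Proof.
move=> h; have -> // : A = C.
by apply: functional_extensionality => x; apply: propositional_extensionality.
Qed.

Lemma open_nbhd (X : Type) (T : topology X) (A : X -> Prop) :
  (forall x, A x -> exists W, [/\ is_open T W, W x & forall y, W y -> A y]) ->
  is_open T A.
Proof.
move=> h.
have := @open_bigU _ T (fun W => is_open T W /\ forall y, W y -> A y) (fun U hU => proj1 hU).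
apply: ext_open => x; split.
  by case=> W [_ hW] Wx; exact: hW.
by move=> /h [W [oW Wx hW]]; exists W.
Qed.

Lemma open_exU (X : Type) (T : topology X) (I : Type) (W : I -> X -> Prop) :
  (forall i, is_open T (W i)) -> is_open T (fun y => exists i, W i y).
Proof.
move=> h; apply: open_nbhd => x [i Wx]; exists (W i); split => // y Wy.
by exists i.
Qed.

Lemma open0 (X : Type) (T : topology X) : is_open T (fun _ => False).
Proof. by apply: open_nbhd => x. Qed.

Lemma open_imp (X : Type) (T : topology X) (P : Prop) (W : X -> Prop) :
  is_open T W -> is_open T (fun y => P -> W y).
Proof.
move=> oW; case: (classic P) => hP.
  by apply: ext_open oW => x; split => // /(_ hP).
by apply: ext_open (@open_setT _ T) => x; split.
Qed.

Lemma open_and_const (X : Type) (T : topology X) (P : Prop) (W : X -> Prop) :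
  is_open T W -> is_open T (fun y => P /\ W y).
Proof.
move=> oW; case: (classic P) => hP.
  by apply: ext_open oW => x; split => // [[]].
by apply: ext_open (open0 T) => x; split => // [[]].
Qed.

Lemma open_finI (X : Type) (T : topology X) (I : finType) (W : I -> X -> Prop) :
  (forall i, is_open T (W i)) -> is_open T (fun y => forall i, W i y).
Proof.
move=> h.
have H : forall l : seq I, is_open T (fun y => forall i, i \in l -> W i y).
  elim=> [|a l IH].
    by apply: ext_open (@open_setT _ T) => x; split => // _ i.
  apply: ext_open (@open_setI _ T _ _ (h a) IH) => x; split.
    by case=> Wa Wl i; rewrite inE => /orP [/eqP -> //|]; exact: Wl.
  by move=> H; split => [|i il]; apply: H; rewrite inE ?eqxx ?il ?orbT.
apply: ext_open (H (enum I)) => x; split => Hx i //.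
by apply: Hx; rewrite mem_enum.
Qed.

Lemma closed_compl (X : Type) (T : topology X) (K : X -> Prop) :
  is_open T K -> is_closed T (fun y => ~ K y).
Proof.
by move=> oK; rewrite /is_closed; apply: ext_open oK => x; split => [|/NNPP] //; auto.
Qed.

Lemma compact_points (X : Type) (T : topology X) (K : X -> Prop) (N : X -> X -> Prop) :
  compact_space T -> is_closed T K ->
  (forall x, K x -> is_open T (N x) /\ N x x) ->
  exists (I : finType) (p : I -> X),
    (forall q, K (p q)) /\ forall y, K y -> exists q, N (p q) y.
Proof.
move=> cpt cK hN.
pose F W := is_open T W /\ ((exists x, K x /\ W = N x) \/ forall y, W y -> ~ K y).
have [l [Fl cov]] : exists l : seq (X -> Prop), (forall i, (i < size l)%N -> F (nthset l i)) /\
    forall x, exists2 i, (i < size l)%N & nthset l i x.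
  apply: cpt => [U [] //|x].
  case: (classic (K x)) => Kx.
    by exists (N x); [split; [exact: (hN x Kx).1|left; exists x]|exact: (hN x Kx).2].
  by exists (fun y => ~ K y) => //; split; [exact: cK|right].
have H : forall l' : seq (X -> Prop), (forall i, (i < size l')%N -> F (nthset l' i)) ->
  exists (I : finType) (p : I -> X), (forall q, K (p q)) /\
    forall y, K y -> (exists2 i, (i < size l')%N & nthset l' i y) -> exists q, N (p q) y.
  elim=> [|W l' IH] hF.
    by exists void; exists (fun v : void => match v with end); split => [[]|y _ [i]].
  have [I [p [Kp cp]]] := IH (fun i hi => hF i.+1 hi).
  have [_ [[x [Kx WN]]|WK]] := hF 0%N isT.
    exists (option I); exists (fun o => if o is Some q then p q else x); split.
      by case.
    move=> y Ky [[|i] hi /= hy].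
      by exists None; rewrite -WN.
    by have [|q hq] := cp y Ky; [by exists i|exists (Some q)].
  exists I; exists p; split => // y Ky [[|i] hi /= hy].
    by case: (WK y hy Ky).
  by apply: cp => //; exists i.
have [I [p [Kp cp]]] := H l Fl.
exists I; exists p; split => // y Ky; apply: cp => //.
Qed.

Lemma regular (X : Type) (T : topology X) (U : X -> Prop) (x : X) :
  compact_space T -> hausdorff_space T -> is_open T U -> U x ->
  exists N M, [/\ is_open T N, is_open T M, N x, (forall y, ~ U y -> M y) &
      forall y, ~ (N y /\ M y)].
Proof.
move=> cpt hd oU Ux.
have [f hf] : exists f : X -> (X -> Prop) * (X -> Prop), forall c, ~ U c ->
    [/\ is_open T (f c).1, is_open T (f c).2, (f c).1 x, (f c).2 c &
      forall z, ~ ((f c).1 z /\ (f c).2 z)].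
  apply: (functional_choice (fun c (nm : (X -> Prop) * (X -> Prop)) => ~ U c ->
    [/\ is_open T nm.1, is_open T nm.2, nm.1 x, nm.2 c &
      forall z, ~ (nm.1 z /\ nm.2 z)])) => c.
  case: (classic (U c)) => Uc.
    by exists ((fun _ => True), (fun _ => True)).
  have cx : x <> c by move=> e; apply: Uc; rewrite -e.
  have [A [B [oA oB Ax Bc dAB]]] := hd x c cx.
  by exists (A, B).
have [I [p [Kp cp]]] := compact_points (N := fun c => (f c).2) cpt (closed_compl oU)
  (fun c hc => let: And5 _ h2 _ h4 _ := hf c hc in conj h2 h4).
exists (fun y => forall q, (f (p q)).1 y); exists (fun y => exists q, (f (p q)).2 y); split.
- by apply: open_finI => q; case: (hf _ (Kp q)).
- by apply: open_exU => q; case: (hf _ (Kp q)).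
- by move=> q; case: (hf _ (Kp q)).
- by move=> y /cp.
by move=> y [hN [q hM]]; case: (hf _ (Kp q)) => _ _ _ _ /(_ y); apply; split.
Qed.

Lemma chain_below (X : Type) (T : topology X) (C : (X -> Prop) -> Prop) (W : X -> Prop) :
  compact_space T -> (exists K, C K) ->
  (forall K1 K2, C K1 -> C K2 -> (forall y, K1 y -> K2 y) \/ (forall y, K2 y -> K1 y)) ->
  (forall K, C K -> is_closed T K) -> is_open T W ->
  (forall y, (forall K, C K -> K y) -> W y) ->
  exists K, C K /\ forall y, K y -> W y.
Proof.
move=> cpt [K0 CK0] tot cl oW hW.
pose F Z := Z = W \/ exists K, C K /\ Z = (fun y => ~ K y).
have [l [Fl cov]] : exists l : seq (X -> Prop), (forall i, (i < size l)%N -> F (nthset l i)) /\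
    forall x, exists2 i, (i < size l)%N & nthset l i x.
  apply: cpt => [Z [->|[K [CK ->]]] //|x]; first exact: cl.
  case: (classic (W x)) => Wx; first by exists W => //; left.
  have [K [CK nK]] : exists K, C K /\ ~ K x.
    apply: NNPP => h; apply: Wx; apply: hW => K CK; apply: NNPP => nK; apply: h; by exists K.
  by exists (fun y => ~ K y) => //; right; exists K.
have H : forall l' : seq (X -> Prop), (forall i, (i < size l')%N -> F (nthset l' i)) ->
  exists K, C K /\ forall y, K y -> (exists2 i, (i < size l')%N & nthset l' i y) -> W y.
  elim=> [|Z l' IH] hF.
    by exists K0; split => // y _ [].
  have [K [CK hK]] := IH (fun i hi => hF i.+1 hi).
  have : F Z := hF 0%N isT; case=> [eZ|[K' [CK' eZ]]].
    exists K; split => // y Ky [[|i] hi /= hy]; first by rewrite -eZ.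
    by apply: hK => //; exists i.
  have [sub|sub] := tot K K' CK CK'.
    exists K; split => // y Ky [[|i] hi /= hy].
      by move: hy; rewrite eZ => /(_ (sub y Ky)).
    by apply: hK => //; exists i.
  exists K'; split => // y Ky [[|i] hi /= hy].
    by move: hy; rewrite eZ => /(_ Ky).
  by apply: (hK y (sub y Ky)); exists i.
have [K [CK hK]] := H l Fl.
by exists K; split => // y Ky; apply: hK.
Qed.

Lemma bdB (G : zmodType) (m : nat) (e f : seq nat -> G) t :
  bd m (fun s => e s - f s) t = bd m e t - bd m f t.
Proof.
rewrite /bd; case: t => [|a t]; first by rewrite subr0.
rewrite -sumrB; apply: eq_bigr => i _; rewrite -sumrB; apply: eq_bigr => v _.
by case: ifP => _; rewrite // opprD.
Qed.

Lemma push_id (G : zmodType) (m : nat) (c : seq nat -> G) :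
  (forall s, c s != 0 -> all (fun i => (i < m)%N) s) ->
  forall t, push m id c t = c t.
Proof.
move=> hc t; rewrite /push.
case: (boolP (all (fun i => (i < m)%N) t)) => ht.
  have [s0 es0] : exists s0 : seq 'I_m, map val s0 = t.
    elim: t ht => [|a t IH] /=; first by exists [::].
    case/andP => am /IH [s0 e]; exists (Ordinal am :: s0); by rewrite /= e.
  have sz : size s0 == size t by rewrite -es0 size_map.
  rewrite (big_pred1 (Tuple sz)) /=; first by rewrite es0.
  move=> s /=; rewrite map_id; apply/eqP/eqP => [e|-> //].
  by apply: val_inj; apply: (inj_map val_inj); rewrite /= e es0.
rewrite big_pred0.
  by case: (eqVneq (c t) 0) => [->//|/hc]; rewrite (negbTE ht).
move=> s; rewrite map_id; apply/negbTE/eqP => e.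
by move: ht; rewrite -e; case/negP; apply/allP => i /mapP [j _ ->].
Qed.

Lemma cont (X : Type) (T : topology X) (G : zmodType) (B : X -> Prop) (k : nat)
  (gamma : seq (X -> Prop) -> seq nat -> G) (C : (X -> Prop) -> Prop) :
  compact_space T -> hausdorff_space T -> cech_class T B k gamma ->
  (exists K, C K) ->
  (forall K1 K2, C K1 -> C K2 -> (forall y, K1 y -> K2 y) \/ (forall y, K2 y -> K1 y)) ->
  (forall K, C K -> [/\ is_closed T K, Defs.subset B K & incl_zero T B K k gamma]) ->
  incl_zero T B (fun y => forall K, C K -> K y) k gamma.
Proof.
move=> cpt hd [cyc ref] neC tot hC U [Uo Ucov].
pose K := fun y => forall K, C K -> K y.
have cK : is_closed T K.
  rewrite /is_closed.
  have : is_open T (fun y => exists K', C K' /\ ~ K' y).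
    apply: open_exU => K'; case: (classic (C K')) => CK'.
      by apply: open_and_const; case: (hC K' CK').
    by apply: ext_open (open0 T) => y; split => // [[]].
  apply: ext_open => y; split; first by move=> [K' [CK' nK']] hK; apply: nK'; exact: hK.
  move=> nK; apply: NNPP => h; apply: nK => K' CK'; apply: NNPP => nK'; apply: h.
  by exists K'.
have [f hf] : exists f : X -> nat * ((X -> Prop) * (X -> Prop)), forall x, K x ->
   [/\ ((f x).1 < size U)%N, nthset U (f x).1 x, is_open T (f x).2.1, is_open T (f x).2.2
     & [/\ (f x).2.1 x, (forall y, ~ nthset U (f x).1 y -> (f x).2.2 y) &
     forall y, ~ ((f x).2.1 y /\ (f x).2.2 y)]].
  apply: (functional_choice (fun x (t : nat * ((X -> Prop) * (X -> Prop))) => K x ->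
   [/\ (t.1 < size U)%N, nthset U t.1 x, is_open T t.2.1, is_open T t.2.2
     & [/\ t.2.1 x, (forall y, ~ nthset U t.1 y -> t.2.2 y) &
     forall y, ~ (t.2.1 y /\ t.2.2 y)]])) => x.
  case: (classic (K x)) => Kx; last by exists (0%N, ((fun _ => True), (fun _ => True))).
  have [i hi Ux] := Ucov x Kx.
  have [N [M [oN oM Nx hM dNM]]] := regular cpt hd (Uo i hi) Ux.
  by exists (i, (N, M)); split.
have [I [p [Kp cp]]] := compact_points (N := fun x => (f x).2.1) cpt cK
   (fun x Kx => let: And5 _ _ h _ (And3 h' _ _) := hf x Kx in conj h h').
pose V := mkseq (fun i y => exists q, (f (p q)).1 = i /\ (f (p q)).2.1 y) (size U).
have sV : size V = size U by rewrite size_mkseq.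
have nV : forall i, (i < size U)%N ->
    nthset V i = (fun y => exists q, (f (p q)).1 = i /\ (f (p q)).2.1 y).
  by move=> i hi; rewrite /nthset nth_mkseq.
pose Bad (S : {set 'I_(size U)}) :=
  ~ exists y, K y /\ forall i : 'I_(size U), i \in S -> nthset U i y.
pose W y := (exists i : 'I_(size U), exists q, (f (p q)).1 = i /\ (f (p q)).2.1 y) /\
   forall S, Bad S -> exists i : 'I_(size U), i \in S /\
     forall q, (f (p q)).1 = i -> (f (p q)).2.2 y.
have oW : is_open T W.
  apply: (@open_setI _ T).
    apply: open_exU => i; apply: open_exU => q; apply: open_and_const.
    by case: (hf _ (Kp q)).
  apply: open_finI => S; apply: open_imp; apply: open_exU => i; apply: open_and_const.
  by apply: open_finI => q; apply: open_imp; case: (hf _ (Kp q)).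
have KW : forall y, K y -> W y.
  move=> y Ky; split.
    have [q hq] := cp y Ky.
    case: (hf _ (Kp q)) => hlt _ _ _ _.
    by exists (Ordinal hlt); exists q.
  move=> S bS; apply: NNPP => h; apply: bS; exists y; split => // i iS.
  apply: NNPP => nU; apply: h; exists i; split => // q eq.
  case: (hf _ (Kp q)) => _ _ _ _ [_ hM _]; apply: hM; by rewrite eq.
have [Kb [CKb sKb]] := chain_below cpt neC tot (fun K CK => let: And3 h _ _ := hC K CK in h) oW KW.
have [clb Bb izb] := hC Kb CKb.
have Vcov : open_cover T Kb V.
  split.
    move=> i; rewrite sV => hi; rewrite nV //.
    apply: open_exU => q; apply: open_and_const; by case: (hf _ (Kp q)).
  move=> x /sKb [[i [q hq]] _]; exists (val i); first by rewrite sV ltn_ord.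
  by rewrite nV ?ltn_ord //; exists q.
have [e ce he] := izb V Vcov.
have BK : forall y, B y -> K y by move=> y By K' CK'; case: (hC K' CK') => _ /(_ y By).
have VcovB : open_cover T B V.
  by case: Vcov => h1 h2; split => // x Bx; apply: h2; apply: Bb.
have UcovB : open_cover T B U.
  by split => // x Bx; apply: Ucov; apply: BK.
have refV : refines B V U id.
  move=> j; rewrite sV => hj; split => // x _; rewrite nV // => -[q [eq hN]].
  apply: NNPP => nU; case: (hf _ (Kp q)) => _ _ _ _ [_ hM dNM].
  by apply: (dNM x); split => //; apply: hM; rewrite eq.
have [g cg hg] := ref U V id UcovB VcovB refV.
have [cycV _] := cyc V VcovB.
have pid := push_id (m := size V) (c := gamma V) (fun s hs => (proj1 (proj2 (cycV s hs)))).
exists (fun s => e s - g s).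
  move=> s; case: (eqVneq (e s) 0) => [e0|].
    rewrite e0 sub0r oppr_eq0 => /cg [sz [alls [x Bx hx]]].
    by split => //; split => //; exists x => //; apply: BK.
  move=> /ce [sz [alls [x Kbx hx]]] _; split => //; split; first by rewrite -sV.
  have [_ W2] := sKb x Kbx.
  pose S := [set i : 'I_(size U) | val i \in s].
  case: (classic (Bad S)) => bS.
    have [i [iS hM]] := W2 S bS.
    move: iS; rewrite inE => /hx; rewrite nV ?ltn_ord // => -[q [eq hN]].
    case: (hf _ (Kp q)) => _ _ _ _ [_ _ dNM].
    by case: (dNM x); split => //; apply: hM.
  have [y [Ky hy]] := NNPP _ bS.
  exists y => // i ins.
  have im : (i < size U)%N by rewrite -sV; exact: (allP alls i ins).
  by apply: (hy (Ordinal im)); rewrite inE.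
move=> t; rewrite bdB -hg pid he sV.
by rewrite opprB addrC subrK.
Qed.
Import GRing.Theory.


Local Close Scope ring_scope.
Theorem lemma2p6 (X : Type) (T : topology X) (G : zmodType) (B : X -> Prop)
  (n : nat) (gamma : seq (X -> Prop) -> seq nat -> G) :
  compact_space T -> hausdorff_space T -> is_closed T B -> (1 <= n)%N ->
  cech_class T B n.-1 gamma ->
  ~ cech_zero T B n.-1 gamma ->
  incl_zero T B (fun _ => True) n.-1 gamma ->
  exists K : X -> Prop, homology_membrane T B K n.-1 gamma.
Proof.
move=> cpt hd cB _ cc _ izX.
pose P K := [/\ is_closed T K, Defs.subset B K & incl_zero T B K n.-1 gamma].
pose Tt := {K : X -> Prop | P K}.
have PX : P (fun _ => True).
  split => //; rewrite /is_closed; apply: ext_open (open0 T) => x; split => //.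
pose t0 : Tt := exist _ _ PX.
pose R (a b : Tt) := boolp.asbool (Defs.subset (sval b) (sval a)).
have [|||t tmax] := @classical_sets.ZL_preorder Tt t0 R.
- by move=> a; apply/boolp.asboolP => x.
- move=> a b c /boolp.asboolP hab /boolp.asboolP hbc; apply/boolp.asboolP => x /hbc /hab //.
- move=> A totA.
  case: (classic (exists s, A s)) => [[s0 As0]|nA]; last first.
    by exists t0 => s As; case: nA; exists s.
  pose C K := exists s, A s /\ K = sval s.
  have hC : forall K, C K -> P K by move=> K [s [_ ->]]; exact: (svalP s).
  have PI : P (fun y => forall K, C K -> K y).
    split.
    + rewrite /is_closed.
      have : is_open T (fun y => exists K', C K' /\ ~ K' y).
        apply: open_exU => K'; case: (classic (C K')) => CK'.
          by apply: open_and_const; case: (hC K' CK').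
        by apply: ext_open (open0 T) => y; split => // [[]].
      apply: ext_open => y; split; first by move=> [K' [CK' nK']] hK; apply: nK'; exact: hK.
      move=> nK; apply: NNPP => h; apply: nK => K' CK'; apply: NNPP => nK'; apply: h.
      by exists K'.
    + by move=> y By K CK; case: (hC K CK) => _ /(_ y By).
    apply: cont => //.
    - by exists (sval s0); exists s0.
    - move=> K1 K2 [s1 [A1 ->]] [s2 [A2 ->]].
      case: (totA s1 s2 A1 A2) => /boolp.asboolP h; [right|left]; exact: h.
  exists (exist _ _ PI) => s As; apply/boolp.asboolP => y /= hy.
  by apply: hy; exists s.
exists (sval t); case: (svalP t) => ct Bt it; split => // K' cK' BK' sK' nsK' iK'.
have PK' : P K' by split.
have := tmax (exist _ _ PK') (introT (boolp.asboolP _) sK').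
by move=> /boolp.asboolP.
Qed.
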